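(* Let $G$ be a finitely generated amenable group, and let $F=(F_n)_{n=1}^\infty$ be a sequence of finite subsets of $G$ that is both a left- and a right-Følner sequence. Then $\textup{cr}_F(G)=\textup{dc}_F(G)$.
   Context: $F$ is left-Følner if $|xF_n\triangle F_n|/|F_n|\to0$ for every $x\in G$, right-Følner if $|F_nx\triangle F_n|/|F_n|\to0$ for every $x\in G$. Writing $\mathcal{C}(G)$ for the set of conjugacy classes of $G$, $\textup{cr}_F(G)=\limsup_{n\to\infty}\frac{|\{C\in\mathcal{C}(G):C\cap F_n\ne\varnothing\}|}{|F_n|}$. $\textup{dc}_F(G)=\limsup_{n\to\infty}(\mu_n\times\mu_n)(\{(x,y):xy=yx\})$, where $\mu_n$ is the uniform probability measure on $F_n$. *)

(* Defs.v *)
From HB Require Import structures.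
From mathcomp Require Import all_boot all_order all_algebra finmap.
From mathcomp Require Import all_classical all_reals all_analysis.
Set Implicit Arguments. Unset Strict Implicit. Unset Printing Implicit Defensive.
Import Order.TTheory GRing.Theory Num.Theory.
Local Open Scope ring_scope.
Local Open Scope fset_scope.
Local Open Scope classical_set_scope.

Definition is_group (G : Type) (mul : G -> G -> G) (inv : G -> G) (e : G) :=
  [/\ associative mul, left_id e mul & left_inverse e inv mul].

Inductive generated (G : eqType) (mul : G -> G -> G) (inv : G -> G) (e : G)
    (S : seq G) : G -> Prop :=
  | gen_one : generated mul inv e S e
  | gen_elt x : x \in S -> generated mul inv e S x
  | gen_inv x : generated mul inv e S x -> generated mul inv e S (inv x)
  | gen_mul x y : generated mul inv e S x -> generated mul inv e S y ->
                  generated mul inv e S (mul x y).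

Definition finitely_generated (G : eqType) (mul : G -> G -> G) (inv : G -> G)
    (e : G) := exists S : seq G, forall x, generated mul inv e S x.

Definition symdiff (G : choiceType) (A B : {fset G}) : {fset G} :=
  ((A `\` B) `|` (B `\` A))%fset.

Definition left_Folner (R : realType) (G : choiceType) (mul : G -> G -> G)
    (F : nat -> {fset G}) :=
  forall x : G,
    let u : R^nat := fun n =>
      (#|` symdiff [fset mul x y | y in F n]%fset (F n)|)%:R / (#|` F n|)%:R in
    u @ \oo --> 0.

Definition right_Folner (R : realType) (G : choiceType) (mul : G -> G -> G)
    (F : nat -> {fset G}) :=
  forall x : G,
    let u : R^nat := fun n =>
      (#|` symdiff [fset mul y x | y in F n]%fset (F n)|)%:R / (#|` F n|)%:R in
    u @ \oo --> 0.

(* Amenability of a countable (e.g. finitely generated) discrete group: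
   existence of a left Følner sequence of nonempty finite sets. *)
Definition amenable (R : realType) (G : choiceType) (mul : G -> G -> G) :=
  exists F : nat -> {fset G}, (forall n, F n != fset0) /\ left_Folner R mul F.

Definition conj_class (G : Type) (mul : G -> G -> G) (inv : G -> G) (x : G)
  : set G := [set mul (mul g x) (inv g) | g in setT]%classic.

(* cr_F(G) = limsup |{C in C(G) : C meets F_n}| / |F_n|.  The conjugacy
   classes meeting F_n are exactly the classes of the elements of F_n. *)
Definition cr (R : realType) (G : choiceType) (mul : G -> G -> G)
    (inv : G -> G) (F : nat -> {fset G}) : R :=
  limn_sup (fun n => (#|` [fset conj_class mul inv x | x in F n]%fset|)%:R
                     / (#|` F n|)%:R).

(* dc_F(G) = limsup (mu_n x mu_n)({(x,y) : xy = yx}), mu_n uniform on F_n *)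
Definition dc (R : realType) (G : choiceType) (mul : G -> G -> G)
    (F : nat -> {fset G}) : R :=
  limn_sup (fun n =>
    (#|` [fset p in (F n `*` F n)%fset | mul p.1 p.2 == mul p.2 p.1]%fset|)%:R
    / ((#|` F n|)%:R * (#|` F n|)%:R)).

(* Main.v *)
Require Import Defs.
From HB Require Import structures.
From mathcomp Require Import all_boot all_order all_algebra finmap.
From mathcomp Require Import all_classical all_reals all_analysis.
Set Implicit Arguments. Unset Strict Implicit. Unset Printing Implicit Defensive.
Import Order.TTheory GRing.Theory Num.Theory.
From mathcomp Require Import lra.
Local Open Scope classical_set_scope.
Local Open Scope fset_scope.

Section RealHelpers.
Local Open Scope ring_scope.

Lemma hR1 (R : realFieldType) (m c N D : R) : 0 < m -> 0 < N ->
  m * c <= N + m * D -> c / N <= m^-1 + D / N.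
Proof.
move=> m0 N0 h; rewrite ler_pdivrMr // mulrDl divfK ?gt_eqF //.
by rewrite -(ler_pM2l m0) mulrDr mulrA mulfV ?gt_eqF // mul1r.
Qed.

Lemma hR2 (R : realFieldType) (m c N D : R) : 0 < m -> 0 < N ->
  N <= m * (c + D) -> m^-1 <= c / N + D / N.
Proof.
move=> m0 N0 h; rewrite -mulrDl ler_pdivlMr //.
rewrite -(ler_pM2l m0) mulrA mulfV ?gt_eqF // mul1r //.
Qed.

Lemma norm_le_both (R : realFieldType) (a b t : R) :
  0 <= a -> a <= t -> 0 <= b -> b <= t -> `|a - b| <= t.
Proof. move=> *; rewrite ler_norml; apply/andP; split; lra. Qed.

End RealHelpers.

Section Grp.
Variables (G : choiceType) (mul : G -> G -> G) (inv : G -> G) (e : G).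
Hypothesis HG : is_group mul inv e.

Let mA : associative mul. Proof. by case: HG. Qed.
Let m1 : left_id e mul. Proof. by case: HG. Qed.
Let mV : left_inverse e inv mul. Proof. by case: HG. Qed.

Lemma gmulV x : mul x (inv x) = e.
Proof.
rewrite -[mul x _]m1 -[in LHS](mV (inv x)) -mA [mul (inv x) (mul x _)]mA mV m1.
by rewrite mV.
Qed.

Lemma gmul1 x : mul x e = x.
Proof. by rewrite -(mV x) mA gmulV m1. Qed.

Lemma gmulK x y : mul (inv x) (mul x y) = y.
Proof. by rewrite mA mV m1. Qed.

Lemma gmulKV x y : mul x (mul (inv x) y) = y.
Proof. by rewrite mA gmulV m1. Qed.

Lemma gmulI x : injective (mul x).
Proof. by move=> y z h; rewrite -(gmulK x y) h gmulK. Qed.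

Lemma gmulIr x : injective (mul^~ x).
Proof.
move=> y z /= h.
by rewrite -(gmul1 y) -(gmulV x) mA h -mA gmulV gmul1.
Qed.

Lemma ginvM x y : inv (mul x y) = mul (inv y) (inv x).
Proof.
apply: (@gmulI (mul x y)); rewrite gmulV -mA [mul y _]mA gmulV m1 gmulV //.
Qed.

Lemma ginvK x : inv (inv x) = x.
Proof. by apply: (@gmulI (inv x)); rewrite gmulV mV. Qed.

Definition cj g y := mul (mul g y) (inv g).

Lemma cjM g h y : cj (mul g h) y = cj g (cj h y).
Proof. by rewrite /cj ginvM !mA. Qed.

Lemma cj1 y : cj e y = y.
Proof. have ie : inv e = e by rewrite -[RHS](mV e) gmul1.
by rewrite /cj m1 ie gmul1. Qed.

Lemma cjI g : injective (cj g).
Proof. by move=> y z; rewrite /cj => /gmulIr /gmulI. Qed.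

Lemma cj_fixE h x : (cj h x == x) = (mul h x == mul x h).
Proof.
apply/eqP/eqP => [E|E].
  by rewrite -[in RHS]E /cj -mA mV gmul1.
by rewrite /cj E -mA gmulV gmul1.
Qed.

Lemma cjK g y : cj (inv g) (cj g y) = y.
Proof. by rewrite -cjM mV cj1. Qed.

Lemma cj_eqE g b x : (cj g x == cj b x) = 
  (mul (mul (inv b) g) x == mul x (mul (inv b) g)).
Proof.
rewrite -cj_fixE cjM.
have -> : (cj (inv b) (cj g x) == x) = (cj (inv b) (cj g x) == cj (inv b) (cj b x)).
  by rewrite cjK.
by rewrite (inj_eq (@cjI _)).
Qed.


Lemma classE x y : (conj_class mul inv y = conj_class mul inv x) <-> exists g, y = cj g x.
Proof.
split.
  move=> h; have : conj_class mul inv y y by exists e => //; exact: cj1.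
  by rewrite h => -[g _ <-]; exists g.
move=> [g ->]; apply/seteqP; split => z [h _ <-].
  by exists (mul h g) => //; rewrite -/(cj _ _) cjM.
by exists (mul h (inv g)) => //; rewrite -/(cj _ _) -/(cj _ _) cjM cjK.
Qed.

Variable S : seq G.

Fixpoint ball (r : nat) : {fset G} :=
  if r is r'.+1 then ball r' `|` [fset mul s b | s in S, b in ball r']
  else [fset e].

Definition orb r x := [fset cj b x | b in ball r].

Lemma ball_sub r : ball r `<=` ball r.+1.
Proof. exact: fsubsetUl. Qed.

Lemma ball_mono r k : r <= k -> ball r `<=` ball k.
Proof.
elim: k => [|k IH]; first by rewrite leqn0 => /eqP ->.
rewrite leq_eqVlt => /orP[/eqP -> //|/IH h]; exact: fsubset_trans h (ball_sub k).
Qed.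

Lemma e_ball r : e \in ball r.
Proof. by apply: (fsubsetP (ball_mono (leq0n r))); rewrite /= inE. Qed.

Lemma orb_sub r x : orb r x `<=` orb r.+1 x.
Proof. by apply: subset_imfset; apply/fsubsetP; exact: ball_sub. Qed.

Lemma x_orb r x : x \in orb r x.
Proof. by apply/imfsetP; exists e; rewrite ?e_ball ?cj1. Qed.

Lemma orb_step r x s y : s \in S -> y \in orb r x -> cj s y \in orb r.+1 x.
Proof.
move=> sS /imfsetP[b bB ->]; apply/imfsetP; exists (mul s b); last by rewrite cjM.
by rewrite /= inE; apply/orP; right; apply/imfset2P; exists s => //; exists b.
Qed.

Lemma orb_closed r x : orb r x = orb r.+1 x ->
  forall g, generated mul inv e S g -> forall y, y \in orb r x -> cj g y \in orb r x.
Proof.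
move=> eqO g; elim => {g}.
- by move=> y yO; rewrite cj1.
- by move=> s sS y yO; rewrite eqO; apply: orb_step.
- move=> g _ IH y yO.
  have sub : [fset cj g z | z in orb r x] `<=` orb r x.
    by apply/fsubsetP => z /imfsetP[w wO ->]; apply: IH.
  have eq : [fset cj g z | z in orb r x] = orb r x.
    apply/eqP; rewrite eqEfcard sub /= [X in _ <= X]card_imfset //; exact: cjI.
  move: yO; rewrite -{1}eq => /imfsetP[z zO ->]; by rewrite cjK.
- by move=> g h _ IHg _ IHh y yO; rewrite cjM; apply: IHg; apply: IHh.
Qed.

Lemma orb_dichot (Hgen : forall g, generated mul inv e S g) x r :
  r < #|` orb r x| \/ (forall g, cj g x \in orb r x).
Proof.
elim: r => [|r [lt|allc]].
- by left; rewrite cardfs_gt0; apply/fset0Pn; exists x; apply: x_orb.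
- have [lt2|ge2] := ltnP r.+1 #|` orb r.+1 x|; first by left.
  right => g.
  have eqO : orb r x = orb r.+1 x.
    apply/eqP; rewrite eqEfcard orb_sub /=.
    exact: leq_trans ge2 lt.
  rewrite -eqO; apply: (orb_closed eqO (Hgen g)); exact: x_orb.
- by right => g; apply: (fsubsetP (orb_sub r x)).
Qed.

Definition Lset a (F : {fset G}) := [fset mul a y | y in F].
Definition Rset a (F : {fset G}) := [fset mul y a | y in F].
Definition sd (A B : {fset G}) := #|` symdiff A B|.

Lemma card_sep (A : {fset G}) (P : pred G) : #|` [fset y in A | P y]| = count P A.
Proof. by rewrite card_fset_sum1 -big_fset_condE sum1_count. Qed.

Lemma sd_sym A B : sd A B = sd B A.
Proof. by rewrite /sd /symdiff fsetUC. Qed.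

Lemma diff_sd A B : #|` A `\` B| <= sd A B.
Proof. by apply: fsubset_leq_card; apply: fsubsetUl. Qed.

Lemma sep_sd (A F : {fset G}) (P : pred G) :
  count P A <= count P F + sd A F.
Proof.
rewrite -!card_sep.
apply: leq_trans (leq_card_fsetU _ _); apply: fsubset_leq_card.
apply/fsubsetP => y; rewrite !inE /= => /andP[yA Py].
case yF: (y \in F); first by apply/orP; left; apply/andP; split.
by apply/orP; right; apply/orP; left; apply/andP; split => //; apply/negbT.
Qed.

Lemma inj_card_le (f : G -> G) (A B : {fset G}) :
  injective f -> (forall a, a \in A -> f a \in B) -> #|` A| <= #|` B|.
Proof.
move=> fi fAB; have : #|` [fset f a | a in A]| = #|` A| by rewrite card_imfset.
move=> <-; apply: fsubset_leq_card; apply/fsubsetP => y /imfsetP[a aA ->].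
exact: fAB.
Qed.

Lemma fib_card (F : {fset G}) b x :
  count (fun g => cj g x == cj b x) F =
  count (fun h => mul h x == mul x h) (Lset (inv b) F).
Proof.
rewrite -!card_sep.
have -> : [fset h in Lset (inv b) F | mul h x == mul x h] =
          [fset mul (inv b) g | g in [fset g in F | cj g x == cj b x]].
  apply/fsetP => h; rewrite !inE /=; apply/andP/imfsetP.
    move=> [/imfsetP[g gF ->] hc]; exists g => //=.
    by rewrite !inE /= gF cj_eqE.
  move=> [g]; rewrite !inE /= => /andP[gF gc] ->; split.
    by apply/imfsetP; exists g.
  by rewrite -cj_eqE.
by rewrite [RHS]card_imfset //; apply: gmulI.
Qed.

Lemma fib_sum (F O : {fset G}) x :
  \sum_(y <- O) count (fun g => cj g x == y) F = count (fun g => cj g x \in O) F.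
Proof.
under eq_bigr do rewrite -sum1_count big_mkcond.
rewrite exchange_big /= -sum1_count [RHS]big_mkcond /=; apply: eq_bigr => g _.
rewrite -big_mkcond sum1_count.
have -> : count (fun y => cj g x == y) O = count_mem (cj g x) O.
  by apply: eq_count => y; rewrite /= eq_sym.
by rewrite count_uniq_mem ?fset_uniq //; case: (_ \in _).
Qed.

Lemma bad_count (F : {fset G}) b :
  count (fun x => cj b x \notin F) F <= sd (Rset (inv b) F) F + sd (Lset b F) F.
Proof.
rewrite -card_sep.
pose A1 := [fset x in F | mul x (inv b) \notin F].
pose A2 := [fset x in F | (mul x (inv b) \in F) && (cj b x \notin F)].
apply: (@leq_trans (#|` A1| + #|` A2|)).
  apply: leq_trans (leq_card_fsetU _ _); apply: fsubset_leq_card.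
  apply/fsubsetP => y; rewrite !inE /= => /andP[yF ybad].
  by case: (mul y (inv b) \in F); rewrite ?yF ?ybad ?orbT.
apply: leq_add.
  apply: leq_trans (diff_sd _ _).
  apply: (@inj_card_le (mul^~ (inv b))); first exact: gmulIr.
  move=> a; rewrite !inE /= => /andP[aF anF]; apply/andP; split => //.
  by apply/imfsetP; exists a.
apply: leq_trans (diff_sd _ _).
apply: (@inj_card_le (cj b)); first exact: cjI.
move=> a; rewrite !inE /= => /andP[aF /andP[zF cnF]]; apply/andP; split => //.
apply/imfsetP; exists (mul a (inv b)) => //.
Qed.

Definition ocnt (F : {fset G}) x :=
  #|` [fset y in F | conj_class mul inv y == conj_class mul inv x]|.

Lemma sum_const_nat (T : Type) (s : seq T) k : \sum_(i <- s) k = k * size s.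
Proof. by rewrite big_const_seq iter_addn_0 count_predT mulnC. Qed.

Lemma perx (F : {fset G}) (M : nat) x
  (Hgen : forall g, generated mul inv e S g) :
  x \in F -> orb M x `<=` F ->
  let m := #|` orb M x| in
  let c := count (fun g => mul x g == mul g x) F in
  let D := \sum_(b <- ball M) sd (Lset (inv b) F) F in
  (M < m /\ m <= ocnt F x /\ m * c <= #|` F| + m * D)
  \/ (ocnt F x = m /\ #|` F| <= m * (c + D) /\ m * c <= #|` F| + m * D).
Proof.
move=> xF OF m c D.
pose fib y := count (fun g => cj g x == y) F.
have Hc : forall y, y \in orb M x -> fib y <= c + D /\ c <= fib y + D.
  move=> y /imfsetP[b bB ->].
  have hD : sd (Lset (inv b) F) F <= D.
    by rewrite /D (big_fsetD1 b) //= leq_addr.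
  have hc : c = count (fun h => mul h x == mul x h) F.
    by apply: eq_count => g; rewrite /= eq_sym.
  rewrite /fib fib_card hc; split.
    by apply: leq_trans (sep_sd _ _ _) _; apply: leq_add.
  apply: leq_trans (sep_sd _ (Lset (inv b) F) _) _.
  by rewrite sd_sym; apply: leq_add.
have Hsum : \sum_(y <- orb M x) fib y = count (fun g => cj g x \in orb M x) F.
  exact: fib_sum.
have Hmc : m * c <= #|` F| + m * D.
  have -> : m * c = \sum_(y <- orb M x) c by rewrite sum_const_nat mulnC.
  apply: (@leq_trans (\sum_(y <- orb M x) (fib y + D))).
    by rewrite big_seq_cond [X in _ <= X]big_seq_cond; apply: leq_sum => y /andP[/Hc [_ h] _].
  rewrite big_split /= Hsum sum_const_nat mulnC leq_add2r.
  exact: count_size.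
have Hmo : m <= ocnt F x.
  apply: fsubset_leq_card; apply/fsubsetP => y yO.
  rewrite !inE /=; apply/andP; split; first exact: (fsubsetP OF).
  move: yO => /imfsetP[b _ ->]; apply/eqP; apply/classE; by exists b.
have [lt|allc] := orb_dichot Hgen x M; [left | right]; first by [].
split; last split => //.
  apply/eqP; rewrite eqn_leq Hmo andbT; apply: fsubset_leq_card.
  apply/fsubsetP => y; rewrite !inE /= => /andP[_ /eqP /classE [g ->]]; exact: allc.
have -> : #|` F| = \sum_(y <- orb M x) fib y.
  by rewrite Hsum -[LHS]count_predT; apply: eq_count => g; rewrite /= allc.
have -> : m * (c + D) = \sum_(y <- orb M x) (c + D) by rewrite sum_const_nat mulnC.
by rewrite big_seq_cond [X in _ <= X]big_seq_cond; apply: leq_sum => y /andP[/Hc [h _] _].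
Qed.

Lemma cr_sum (R : realType) (F : {fset G}) :
  (#|` [fset conj_class mul inv x | x in F]|%:R : R)%R =
  (\sum_(x <- F) ((ocnt F x)%:R)^-1)%R.
Proof.
rewrite (partition_big_imfset _ (conj_class mul inv)) /= card_fset_sum1 natr_sum.
rewrite big_seq [X in _ = X]big_seq; apply: eq_bigr => t /imfsetP[x0 x0F ->].
under eq_bigr => x /eqP hx do rewrite /ocnt hx card_sep.
rewrite big_const_seq iter_addr_0 -[RHS]mulr_natr mulVf // pnatr_eq0 -lt0n -has_count.
by apply/hasP; exists x0 => //.
Qed.

Lemma dc_sum (F : {fset G}) :
  #|` [fset p in F `*` F | mul p.1 p.2 == mul p.2 p.1]| =
  \sum_(x <- F) count (fun g => mul x g == mul g x) F.
Proof.
under eq_bigr do rewrite -sum1_count.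
rewrite pair_big_dep_cond card_fset_sum1.
apply: eq_fbigl => -[a b]; apply/idP/idP.
  rewrite !inE /= => /andP[/andP[aF bF] abc].
  by apply: in_imfset2; rewrite !inE /= ?aF ?bF ?abc.
move=> /(@imfset2P _ _ _ (fun _ => G))[a0 ha [b0 hb [-> ->]]]; move: ha hb => /= ha hb; move: ha hb; rewrite !inE /= => /andP[aF _] /andP[bF bc].
by apply/andP; split => //; apply/andP; split.
Qed.

Local Open Scope ring_scope.
Lemma perx_real (R : realType) (F : {fset G}) (M : nat) x
  (Hgen : forall g, generated mul inv e S g) :
  x \in F -> (0 < M)%N ->
  (`|((ocnt F x)%:R : R)^-1 - (count (fun g => mul x g == mul g x) F)%:R / #|`F|%:R|
   <= M%:R^-1 + (\sum_(b <- ball M) sd (Lset (inv b) F) F)%:R / #|`F|%:R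
      + (~~ (orb M x `<=` F))%:R)%R.
Proof.
move=> xF M0.
set N := (#|`F|%:R : R); set c := count _ F; set D := \sum_(b <- _) _.
set o := ocnt F x; set m := #|` orb M x|.
have N0 : (0 < N)%R by rewrite ltr0n cardfs_gt0; apply/fset0Pn; exists x.
have o1 : (1 <= o)%N.
  by rewrite /o /ocnt card_sep -has_count; apply/hasP; exists x => //=.
have hm1 : (1 <= m)%N by rewrite /m cardfs_gt0; apply/fset0Pn; exists x; exact: x_orb.
have Mpos : (0 < (M%:R : R))%R by rewrite ltr0n.
have mpos : (0 < (m%:R : R))%R by rewrite ltr0n.
have opos : (0 < (o%:R : R))%R by rewrite ltr0n.
have cN : (c%:R / N <= 1)%R.
  by rewrite ler_pdivrMr // mul1r ler_nat /c; apply: count_size.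
have c0 : (0 <= c%:R / N)%R by rewrite divr_ge0 // ltW.
have DN : (0 <= D%:R / N)%R by rewrite divr_ge0 // ltW.
have Mi : (0 <= (M%:R : R)^-1)%R by rewrite invr_ge0 ltW.
have oi : (0 <= (o%:R : R)^-1)%R by rewrite invr_ge0 ltW.
have oi1 : ((o%:R : R)^-1 <= 1)%R by rewrite invf_le1 // ler1n.
case: (boolP (orb M x `<=` F)) => OF /=; last first.
  apply: norm_le_both => //; lra.
rewrite addr0.
have hmc' : ((m%:R : R) * c%:R <= N + m%:R * D%:R)%R.
  have [[_ [_ h]]|[_ [_ h]]] := perx Hgen xF OF;
  by rewrite /N -!natrM -natrD ler_nat.
have h1 := hR1 mpos N0 hmc'.
have [[Mm [mo _]]|[oe [hN _]]] := perx Hgen xF OF.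
  have mM : ((m%:R : R)^-1 <= M%:R^-1)%R.
    by rewrite lef_pV2 ?posrE // ler_nat ltnW.
  have oM : ((o%:R : R)^-1 <= M%:R^-1)%R.
    by rewrite lef_pV2 ?posrE // ler_nat (leq_trans (ltnW Mm)).
  apply: norm_le_both => //; lra.
have h2 : ((m%:R : R)^-1 <= c%:R / N + D%:R / N)%R.
  apply: hR2 => //; by rewrite /N -natrD -natrM ler_nat.
rewrite /o oe ler_norml; apply/andP; split; lra.
Qed.

Lemma count_sum (a : pred G) (s : seq G) : count a s = (\sum_(x <- s) a x)%N.
Proof. by rewrite -sum1_count big_mkcond. Qed.

Lemma bad_x (F : {fset G}) M x :
  (~~ (orb M x `<=` F) <= \sum_(b <- ball M) (cj b x \notin F))%N.
Proof.
case: (boolP (orb M x `<=` F)) => // /fsubsetPn [y /imfsetP[b bB ->] ynF].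
by rewrite (big_fsetD1 b) //= ynF.
Qed.

Lemma bad_sum (F : {fset G}) M :
  (\sum_(x <- F) (~~ (orb M x `<=` F)) <=
   \sum_(b <- ball M) (sd (Rset (inv b) F) F + sd (Lset b F) F))%N.
Proof.
apply: (@leq_trans (\sum_(x <- F) \sum_(b <- ball M) (cj b x \notin F))%N).
  by apply: leq_sum => x _; apply: bad_x.
rewrite exchange_big /=; apply: leq_sum => b _.
by rewrite -count_sum; apply: bad_count.
Qed.

Definition Eterm (R : realType) (F : {fset G}) M : R :=
  ((\sum_(b <- ball M) (sd (Lset (inv b) F) F + (sd (Rset (inv b) F) F + sd (Lset b F) F)))%N%:R
   / #|`F|%:R)%R.

Lemma perF (R : realType) (F : {fset G}) (M : nat)
  (Hgen : forall g, generated mul inv e S g) :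
  F != fset0 -> (0 < M)%N ->
  (`| (#|` [fset conj_class mul inv x | x in F]|%:R / #|`F|%:R : R) -
      #|` [fset p in F `*` F | mul p.1 p.2 == mul p.2 p.1]|%:R / (#|`F|%:R * #|`F|%:R) |
   <= M%:R^-1 + Eterm R F M)%R.
Proof.
move=> Fne M0.
set N := (#|`F|%:R : R).
have N0 : (0 < N)%R by rewrite ltr0n cardfs_gt0.
rewrite cr_sum dc_sum.
set D := (\sum_(b <- ball M) sd (Lset (inv b) F) F)%N.
set c := fun x => count (fun g => mul x g == mul g x) F.
have -> : ((\sum_(x <- F) ((ocnt F x)%:R)^-1) / N - (\sum_(x <- F) c x)%:R / (N * N)
   = (\sum_(x <- F) (((ocnt F x)%:R)^-1 - (c x)%:R / N)) / N)%R.
  rewrite sumrB natr_sum mulrBl; congr (_ - _).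
  by rewrite invfM mulrA mulr_suml.
rewrite normrM normfV (gtr0_norm N0).
rewrite ler_pdivrMr //.
have H : (\sum_(x <- F) `|((ocnt F x)%:R)^-1 - (c x)%:R / N|
   <= \sum_(x <- F) (M%:R^-1 + D%:R / N + ((~~ (orb M x `<=` F)) : nat)%:R))%R.
  by rewrite big_seq [X in _ <= X]big_seq; apply: ler_sum => x xF; apply: perx_real.
apply: (le_trans (ler_norm_sum _ _ _)); apply: (le_trans H).
rewrite big_split /= big_const_seq count_predT iter_addr_0 -[_ *+ #|`F|]mulr_natr -/N.
rewrite -natr_sum /Eterm -/N mulrDl divfK ?gt_eqF // big_split /= natrD.
rewrite [X in _ <= X]mulrDl divfK ?gt_eqF //.
have := bad_sum F M; rewrite -(ler_nat R) => hb.
lra.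
Qed.

Lemma cvg_sum_seq (R : realType) (T : Type) (s : seq T) (u : T -> nat -> R) :
  (forall t, u t @ \oo --> 0) ->
  (fun n => \sum_(t <- s) u t n) @ \oo --> 0.
Proof.
move=> hu; elim: s => [|t s IH].
  under eq_fun do rewrite big_nil. exact: cvg_cst.
under eq_fun do rewrite big_cons.
have h := cvgD (hu t) IH; rewrite addr0 in h; exact: h.
Qed.

Lemma Eterm_cvg (R : realType) (F : nat -> {fset G}) M :
  left_Folner R mul F -> right_Folner R mul F ->
  (fun n => Eterm R (F n) M) @ \oo --> 0.
Proof.
move=> HL HR.
have eq : (fun n => Eterm R (F n) M) = (fun n => \sum_(b <- ball M)
   ((sd (Lset (inv b) (F n)) (F n))%:R / #|`F n|%:R +
    ((sd (Rset (inv b) (F n)) (F n))%:R / #|`F n|%:R +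
     (sd (Lset b (F n)) (F n))%:R / #|`F n|%:R))).
  apply/funext => n; rewrite /Eterm natr_sum mulr_suml; apply: eq_bigr => b _.
  by rewrite !natrD !mulrDl.
rewrite eq; apply: cvg_sum_seq => b.
have h := cvgD (HL (inv b)) (cvgD (HR (inv b)) (HL b)).
rewrite !addr0 in h; exact: h.
Qed.

End Grp.

Section Fin.
Local Open Scope ring_scope.
Lemma bounded_of (R : realType) (a : nat -> R) M :
  (forall n, `|a n| <= M) -> bounded_fun a.
Proof.
move=> ha; rewrite /bounded_near; near=> K => n _ /=.
apply: le_trans (ha n) _; near: K; apply: nbhs_pinfty_ge; exact: num_real.
Unshelve. all: by end_near. Qed.

Lemma fin_arith (R : realType) (d E eps m : R) :
  d <= m + E -> `|E| < eps / 2 -> m < eps / 2 -> d < eps.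
Proof. move=> h1 h2 h3; have := ler_norm E; lra. Qed.

Lemma final_limsup (R : realType) (a b : nat -> R) :
  (exists M : R, forall n, `|a n| <= M) -> (exists M : R, forall n, `|b n| <= M) ->
  (fun n => a n - b n) @ \oo --> 0 -> limn_sup a = limn_sup b.
Proof.
move=> [Ma ha] [Mb hb] hd.
have ba : bounded_fun a by apply: bounded_of ha.
have bb : bounded_fun b by apply: bounded_of hb.
have bd : bounded_fun (fun n => a n - b n) by apply: bounded_funD => //; apply: bounded_funN.
have bd' : bounded_fun (fun n => b n - a n) by apply: bounded_funD => //; apply: bounded_funN.
have hd' : (fun n => b n - a n) @ \oo --> 0.
  have e : (fun n => b n - a n) = (fun n => - (a n - b n)).
    by apply/funext => n; rewrite opprB.
  rewrite e -oppr0; exact: cvgN hd.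
have e1 : a = b \+ (fun n => a n - b n) by apply/funext => n /=; rewrite addrC subrK.
have e2 : b = a \+ (fun n => b n - a n) by apply/funext => n /=; rewrite addrC subrK.
have l1 := le_limn_supD bb bd; rewrite -e1 (cvg_limn_inf_sup hd).2 addr0 in l1.
have l2 := le_limn_supD ba bd'; rewrite -e2 (cvg_limn_inf_sup hd').2 addr0 in l2.
by apply/eqP; rewrite eq_le l1 l2.
Qed.
End Fin.

Theorem theorem1p21 (R : realType) (G : choiceType)
    (mul : G -> G -> G) (inv : G -> G) (e : G)
    (HG : is_group mul inv e)
    (Hfg : finitely_generated mul inv e)
    (Ham : amenable R mul)
    (F : nat -> {fset G})
    (HFne : forall n, F n != fset0)
    (HFl : left_Folner R mul F)
    (HFr : right_Folner R mul F) :
  cr R mul inv F = dc R mul F.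
Proof.
case: Hfg => S Hgen.
have Hn0 n : (0 < (#|` F n|%:R : R))%R by rewrite ltr0n cardfs_gt0.
apply: final_limsup.
- exists 1%R => n.
  rewrite ger0_norm ?divr_ge0 // ler_pdivrMr // mul1r ler_nat.
  exact: leq_imfset_card.
- exists 1%R => n.
  rewrite ger0_norm ?divr_ge0 ?mulr_ge0 // ler_pdivrMr ?mulr_gt0 // mul1r -natrM ler_nat.
  rewrite dc_sum; apply: (@leq_trans (\sum_(x <- F n) #|` F n|)).
    by apply: leq_sum => x _; exact: count_size.
  by rewrite sum_const_nat.
- apply/cvgr0Pnorm_lt => eps eps0.
  have e2 : (0 < eps / 2)%R by rewrite divr_gt0.
  have [K _ HK] := near_infty_natSinv_lt (PosNum e2).
  have hK := HK K (leqnn K); rewrite /= in hK.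
  have hE := Eterm_cvg inv e S K.+1 HFl HFr.
  move/cvgr0Pnorm_lt: hE => /(_ _ e2) hE.
  apply: filterS hE => n hn.
  have hp := perF HG R Hgen (HFne n) (ltn0Sn K).
  exact: fin_arith hp hn hK.
Qed.
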